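(* The automorphism group $\Gamma(B)$ of the betweenness relation $B$ on $\mathbb Q\times\mathbb Z$ consists exactly of all positive permutations of $\mathbb Q\times\mathbb Z$ that initiate a strictly increasing map of $\mathbb Q$, together with all negative permutations of $\mathbb Q\times\mathbb Z$ that initiate a strictly decreasing map of $\mathbb Q$.
   Context: $\mathbb Q\times\mathbb Z$ denotes the set $\mathbb Q\times\mathbb Z$ with the lexicographic order: $(r,z)<(r',z')$ iff $r<r'$, or $r=r'$ and $z<z'$. $B(a,b,c)\iff(a<b<c)\vee(a>b>c)$ on $\mathbb Q\times\mathbb Z$, and $\Gamma(B)$ is the group of permutations of $\mathbb Q\times\mathbb Z$ preserving $B$. A vertical is a set $\{r\}\times\mathbb Z$. A permutation $g$ is systemic if it maps every vertical onto a vertical; it initiates the permutation $h$ of $\mathbb Q$ with $g(\{a\}\times\mathbb Z)=\{h(a)\}\times\mathbb Z$. A systemic permutation is positive if it preserves the order on each vertical and negative if it reverses the order on each vertical. *)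

(* Defs.v *)
From mathcomp Require Import all_boot all_order all_algebra.
Set Implicit Arguments. Unset Strict Implicit. Unset Printing Implicit Defensive.
Import Order.TTheory GRing.Theory Num.Theory.
Local Open Scope ring_scope.

Definition QZ := (rat * int)%type.

Definition ltQZ (p q : QZ) : Prop :=
  (p.1 < q.1) \/ (p.1 = q.1 /\ p.2 < q.2).

Definition B (a b c : QZ) : Prop :=
  (ltQZ a b /\ ltQZ b c) \/ (ltQZ c b /\ ltQZ b a).

Definition preservesB (g : QZ -> QZ) : Prop :=
  forall a b c, B a b c <-> B (g a) (g b) (g c).

Definition vertical (r : rat) (p : QZ) : Prop := p.1 = r.

Definition initiates (g : QZ -> QZ) (h : rat -> rat) : Prop :=
  forall a, (forall p, vertical a p -> vertical (h a) (g p)) /\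
            (forall q, vertical (h a) q -> exists p, vertical a p /\ g p = q).

Definition systemic (g : QZ -> QZ) : Prop :=
  forall a, exists b, (forall p, vertical a p -> vertical b (g p)) /\
            (forall q, vertical b q -> exists p, vertical a p /\ g p = q).

Definition positive (g : QZ -> QZ) : Prop :=
  systemic g /\ forall r (z z' : int), z < z' -> ltQZ (g (r, z)) (g (r, z')).

Definition negative (g : QZ -> QZ) : Prop :=
  systemic g /\ forall r (z z' : int), z < z' -> ltQZ (g (r, z')) (g (r, z)).

(* Main.v *)
Require Import Defs.
From mathcomp Require Import all_boot all_order all_algebra.
From mathcomp Require Import zify ring lra.
Import Order.TTheory GRing.Theory Num.Theory.
Local Open Scope ring_scope.
Set Implicit Arguments.

Lemma ltQZ_irr x : ~ ltQZ x x.
Proof. case: x => a b; rewrite /ltQZ /= => -[h|[_ h]]; [lra|lia]. Qed.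

Lemma ltQZ_trans x y z : ltQZ x y -> ltQZ y z -> ltQZ x z.
Proof.
case: x => a b; case: y => c d; case: z => e f; rewrite /ltQZ /=.
case=> [h1|[h1 h2]]; case=> [h3|[h3 h4]]; subst.
- left; lra.
- by left.
- by left.
- right; split => //; lia.
Qed.

Lemma ltQZ_total x y : x = y \/ ltQZ x y \/ ltQZ y x.
Proof.
case: x => a b; case: y => c d; rewrite /ltQZ /=.
case: (ltgtP a c) => h; [by right; left; left|by right; right; left|subst].
case: (ltgtP b d) => h; [by right; left; right|by right; right; right|by subst; left].
Qed.

Lemma ltQZ_asym x y : ltQZ x y -> ltQZ y x -> False.
Proof. move=> h1 h2; exact: ltQZ_irr (ltQZ_trans h1 h2). Qed.

Definition monoQ (g : QZ -> QZ) := forall x y, ltQZ x y -> ltQZ (g x) (g y).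
Definition antiQ (g : QZ -> QZ) := forall x y, ltQZ x y -> ltQZ (g y) (g x).

Section S.
Variable f : QZ -> QZ.
Hypothesis pf : forall a b c, B a b c -> B (f a) (f b) (f c).
Let s x y := ltQZ (f x) (f y).

Lemma L3 x y z : ltQZ x y -> ltQZ y z -> (s x y <-> s y z) /\ (s x y <-> s x z).
Proof.
move=> h1 h2; have [[k1 k2]|[k1 k2]] := pf (or_introl (conj h1 h2)); rewrite /s.
- by split; split=> // _; apply: ltQZ_trans k1 k2.
- have k3 := ltQZ_trans k1 k2.
  split; split=> h; exfalso; [exact: ltQZ_asym h k2|exact: ltQZ_asym h k1
    |exact: ltQZ_asym h k2|exact: ltQZ_asym h k3].
Qed.

Lemma CL x y z : ltQZ x y -> ltQZ x z -> (s x y <-> s x z).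
Proof.
move=> h1 h2; have [<-|[h|h]] := ltQZ_total y z; first by [].
- exact: (L3 h1 h).2.
- by have := (L3 h2 h).2; tauto.
Qed.

Lemma CR x y z : ltQZ x z -> ltQZ y z -> (s x z <-> s y z).
Proof.
move=> h1 h2; have [<-|[h|h]] := ltQZ_total x y; first by [].
- by have := L3 h h2; tauto.
- by have := L3 h h1; tauto.
Qed.

Lemma Gen x y u v : ltQZ x y -> ltQZ u v -> (s x y <-> s u v).
Proof.
move=> h1 h2; have [e|[h|h]] := ltQZ_total x u; first by subst u; exact: CL h1 h2.
- have hxv := ltQZ_trans h h2.
  by have := CL h1 hxv; have := CR hxv h2; tauto.
- have hux := ltQZ_trans h h1.
  by have := CL h2 hux; have := CR hux h1; tauto.
Qed.

Lemma mono_or_anti : injective f -> monoQ f \/ antiQ f.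
Proof.
move=> inj.
have hab : ltQZ (0, 0) (0, 1) by right; split => //.
have [e|[h|h]] := ltQZ_total (f (0,0)) (f (0,1)).
- by have := inj _ _ e; case.
- by left=> x y hxy; apply/(Gen hxy hab).
- right=> x y hxy.
  have [e|[h'|h']] := ltQZ_total (f x) (f y).
  + by rewrite (inj _ _ e) in hxy; case: (ltQZ_irr hxy).
  + have := (Gen hxy hab).1 h'; rewrite /s => h2; case: (ltQZ_asym h h2).
  + by [].
Qed.
End S.

Lemma mono_refl g x y : monoQ g -> ltQZ (g x) (g y) -> ltQZ x y.
Proof.
move=> m h; have [e|[h'|h']] := ltQZ_total x y.
- by subst; case: (ltQZ_irr h).
- by [].
- by case: (ltQZ_asym h (m _ _ h')).
Qed.

Lemma anti_refl g x y : antiQ g -> ltQZ (g y) (g x) -> ltQZ x y.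
Proof.
move=> m h; have [e|[h'|h']] := ltQZ_total x y.
- by subst; case: (ltQZ_irr h).
- by [].
- by case: (ltQZ_asym h (m _ _ h')).
Qed.

Lemma mono_B g : monoQ g -> preservesB g.
Proof.
move=> m a b c; rewrite /B; split.
- by case=> -[h1 h2]; [left|right]; split; apply: m.
- by case=> -[h1 h2]; [left|right]; split; apply: mono_refl m _.
Qed.

Lemma anti_B g : antiQ g -> preservesB g.
Proof.
move=> m a b c; rewrite /B; split.
- by case=> -[h1 h2]; [right|left]; split; apply: m.
- by case=> -[h1 h2]; [right|left]; split; apply: anti_refl m _.
Qed.

Definition succ (p : QZ) : QZ := (p.1, p.2 + 1).
Definition adj x y := ltQZ x y /\ forall w, ~ (ltQZ x w /\ ltQZ w y).

Lemma adj_succ x : adj x (succ x).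
Proof.
case: x => a b; split; first by right; split => //=; lia.
case=> c d; rewrite /ltQZ /= => -[[h1|[h1 h2]] [h3|[h3 h4]]]; subst.
- by have := lt_trans h1 h3; rewrite ltxx.
- by rewrite ltxx in h1.
- by rewrite ltxx in h3.
- lia.
Qed.

Lemma adj_eq x y : adj x y -> y = succ x.
Proof.
case: x => a b; case: y => c d; rewrite /succ /= => -[h H].
case: h => /= h.
- case: (H (a, b + 1)); split; [right; split => //=; lia| by left].
- case: h => h1 h2; subst.
  have [e|e] : d = b + 1 \/ b + 1 < d by lia.
  + by rewrite e.
  + case: (H (c, b + 1)); split; right; split => //=; lia.
Qed.

Lemma mono_succ g : bijective g -> monoQ g -> forall x, g (succ x) = succ (g x).
Proof.
move=> [gi gK giK] m x; apply: adj_eq; split; first exact: m (adj_succ x).1.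
move=> w [h1 h2]; apply: ((adj_succ x).2 (gi w)); split; apply: (mono_refl (g:=g)) => //;
  by rewrite giK.
Qed.

Lemma anti_succ g : bijective g -> antiQ g -> forall x, g x = succ (g (succ x)).
Proof.
move=> [gi gK giK] m x; apply: adj_eq; split; first exact: m (adj_succ x).1.
move=> w [h1 h2]; apply: ((adj_succ x).2 (gi w)); split; apply: (anti_refl (g:=g)) => //;
  by rewrite giK.
Qed.

Lemma form (g : QZ -> QZ) (e : int) (hs : forall p : QZ, g (succ p) = ((g p).1, (g p).2 + e)) (r : rat) (z : int) :
  g (r, z) = ((g (r, 0)).1, (g (r, 0)).2 + e * z).
Proof.
have pos : forall n : nat, g (r, n%:Z) = ((g (r, 0)).1, (g (r, 0)).2 + e * n%:Z).
  elim=> [|n IH]; first by rewrite mulr0 addr0; case: (g (r, 0)).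
  have -> : (r, n.+1%:Z) = succ (r, n%:Z) by rewrite /succ /= -addn1 PoszD.
  by rewrite hs IH /=; congr pair; rewrite -addn1 PoszD; ring.
have neg : forall n : nat, g (r, - n%:Z) = ((g (r, 0)).1, (g (r, 0)).2 - e * n%:Z).
  elim=> [|n IH]; first by rewrite oppr0 mulr0 subr0; case: (g (r, 0)).
  have E : (r, - n%:Z) = succ (r, - n.+1%:Z) by rewrite /succ /= -addn1 PoszD; congr pair; ring.
  move: IH; rewrite E hs; case: (g (r, - n.+1%:Z)) => a b /= [-> H].
  congr pair; rewrite -addn1 PoszD; lia.
case: z => n; first exact: pos.
rewrite NegzE neg; congr pair; ring.
Qed.

Section Build.
Variables (g : QZ -> QZ) (e : int).
Hypothesis he : e * e = 1.
Hypothesis ginj : injective g.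
Hypothesis hs : forall p : QZ, g (succ p) = ((g p).1, (g p).2 + e).

Lemma build_init : initiates g (fun r => (g (r, 0)).1).
Proof.
move=> a; split.
- by case=> r z; rewrite /vertical /= => ->; rewrite (@form g e hs).
- case=> s w; rewrite /vertical /= => ->; exists (a, e * (w - (g (a, 0)).2)); split => //.
  rewrite [LHS](@form g e hs); congr pair; rewrite mulrA he; ring.
Qed.

Lemma build_hinj r r' : (g (r, 0)).1 = (g (r', 0)).1 -> r = r'.
Proof.
move=> E.
have : g (r', 0) = g (r, e * ((g (r', 0)).2 - (g (r, 0)).2)).
  rewrite [RHS](@form g e hs r) mulrA he E; case: (g (r', 0)) => ? ? /=; congr pair; ring.
by move/ginj => [].
Qed.
End Build.

Theorem mainTheorem11 (g : QZ -> QZ) (hg : bijective g) :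
  preservesB g <->
  ((positive g /\ exists h : rat -> rat, initiates g h /\
       (forall x y : rat, x < y -> h x < h y)) \/
   (negative g /\ exists h : rat -> rat, initiates g h /\
       (forall x y : rat, x < y -> h y < h x))).
Proof.
have ginj := bij_inj hg.
split.
- move=> pB.
  have [m|m] := mono_or_anti (fun a b c => (pB a b c).1) ginj.
  + have hs : forall p : QZ, g (succ p) = ((g p).1, (g p).2 + 1) by move=> p; rewrite mono_succ.
    have he : (1 : int) * 1 = 1 by [].
    have I := @build_init g _ he hs.
    left; split.
    * split; last by move=> r z z' hz; apply: m; right.
      by move=> a; exists ((g (a, 0)).1); exact: I a.
    * exists (fun r => (g (r, 0)).1); split => // x y hxy.
      have [//|[E _]] := m (x, 0) (y, 0) (or_introl hxy).
      by move: (@build_hinj g _ he ginj hs _ _ E) hxy => ->; rewrite ltxx.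
  + have hs : forall p : QZ, g (succ p) = ((g p).1, (g p).2 + -1).
      by move=> p; rewrite [in RHS](anti_succ hg m p) /succ /=; case: (g (succ p)) => ? ? /=;
         congr pair; ring.
    have he : (-1 : int) * -1 = 1 by [].
    have I := @build_init g _ he hs.
    right; split.
    * split; last by move=> r z z' hz; apply: m; right.
      by move=> a; exists ((g (a, 0)).1); exact: I a.
    * exists (fun r => (g (r, 0)).1); split => // x y hxy.
      have [//|[E _]] := m (x, 0) (y, 0) (or_introl hxy).
      by move: (@build_hinj g _ he ginj hs _ _ (esym E)) hxy => ->; rewrite ltxx.
- case=> [[[_ pz] [h [I hm]]]|[[_ pz] [h [I hm]]]].
  + apply: mono_B; case=> r z; case=> s w; rewrite /ltQZ /= => -[hrs|[-> hzw]].
    * left; rewrite ((I r).1 (r, z) erefl) ((I s).1 (s, w) erefl); exact: hm.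
    * exact: pz.
  + apply: anti_B; case=> r z; case=> s w; rewrite /ltQZ /= => -[hrs|[-> hzw]].
    * left; rewrite ((I r).1 (r, z) erefl) ((I s).1 (s, w) erefl); exact: hm.
    * exact: pz.
Qed.
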